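(* Fix $\alpha>0$ and positive integers $n$ and $h$. If $\pi\in S_n$ is chosen uniformly at random, then $$\Pr\big[\mathrm{Int}(\pi,\pi+h)\ge n^{2/3+\alpha}\big]\le\big(e^5 n^{-3\alpha/2}\big)^{n^{2/3+\alpha}}.$$
   Context: For a sequence $\sigma=(\sigma(1),\dots,\sigma(n))$ of distinct integers, an exact pattern of $\sigma$ is a sequence $\rho=(\rho(1),\dots,\rho(k))$ such that there are indices $1\le i_1<\dots<i_k\le n$ with $\sigma(i_j)=\rho(j)$ for all $j$. For $\pi\in S_n$ (in one-line notation) and an integer $h$, $\pi+h$ denotes the sequence $(\pi(1)+h,\dots,\pi(n)+h)$. The ordered intersection $\mathrm{Int}(\sigma,\tau)$ of two such sequences is the largest $k$ such that $\sigma$ and $\tau$ share a common exact pattern of length $k$. *)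

(* Defs.v *)
From mathcomp Require Import all_boot all_fingroup.
From Stdlib Require Import Reals.
Set Implicit Arguments. Unset Strict Implicit. Unset Printing Implicit Defensive.

Definition oneline n (s : 'S_n) : seq nat := [seq (s i).+1 | i <- enum 'I_n].

Definition shift_seq (h : nat) (s : seq nat) : seq nat := [seq x + h | x <- s].

(* Ordered intersection: largest length of a common exact pattern, i.e. of a
   sequence that is a subsequence (subseq) of both. Every exact pattern of s is
   mask m s for some bitmask m of length size s. *)
Definition Int (s t : seq nat) : nat :=
  \max_(m : (size s).-tuple bool | subseq (mask m s) t) size (mask m s).

Definition Rleb (x y : R) : bool := if Rle_dec x y then true else false.

Definition prob_Int_ge (n h : nat) (a : R) : R :=
  (INR #|[set s : 'S_n | Rleb (Rpower (INR n) (2/3 + a))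
                              (INR (Int (oneline s) (shift_seq h (oneline s))))]|
   / INR (n `!))%R.

(* Main.v *)
Require Import Defs.
From mathcomp Require Import all_boot all_fingroup.
From Stdlib Require Import Reals Lra.
Set Implicit Arguments. Unset Strict Implicit. Unset Printing Implicit Defensive.


Section Comb.
Variables (n h : nat).
Hypothesis hpos : 0 < h.

Definition Acon (I J : {set 'I_n}) : {set 'S_n} :=
  [set s : 'S_n | [seq (s i : nat) | i <- enum I] == [seq (s j : nat) + h | j <- enum J]].

Lemma Acon_inj I J s1 s2 : s1 \in Acon I J -> s2 \in Acon I J ->
  (forall i, i \notin J -> s1 i = s2 i) -> s1 = s2.
Proof.
rewrite !inE => /eqP H1 /eqP H2 Hout.
have key : forall m i, n - s1 i < m -> s1 i = s2 i.
  elim=> [//|m IH] i Hi.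
  case: (boolP (i \in J)) => iJ; last exact: Hout.
  have : i \in enum J by rewrite mem_enum.
  move/(nthP i) => [t Ht Hti].
  have Hsz : size (enum I) = size (enum J).
    by rewrite -(size_map (fun i => (s1 i : nat)) (enum I)) H1 size_map.
  set p := nth i (enum I) t.
  have E1 : (s1 p : nat) = s1 i + h.
    have := congr1 (fun l => nth 0 l t) H1.
    by rewrite /= (nth_map i) ?Hsz // (nth_map i) // Hti.
  have E2 : (s2 p : nat) = s2 i + h.
    have := congr1 (fun l => nth 0 l t) H2.
    by rewrite /= (nth_map i) ?Hsz // (nth_map i) // Hti.
  have Hp : s1 p = s2 p.
    apply: IH.
    have := ltn_ord (s1 p); rewrite E1 => hlt.
    rewrite ltnS in Hi; apply: leq_trans Hi.
    apply: ltn_sub2l => //; by rewrite -addn1 leq_add2l.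
  apply: val_inj; apply/eqP; rewrite -(eqn_add2r h) -E1 -E2 Hp //.
apply/permP => i; apply: (key (n - s1 i).+1); exact: ltnSn.
Qed.

Lemma card_Acon (I J : {set 'I_n}) k : #|J| = k -> #|Acon I J| <= n ^_ (n - k).
Proof.
move=> HJ.
pose phi (s : 'S_n) : #|~: J|.-tuple 'I_n := map_tuple (fun j => s j) (enum_tuple (~: J)).
rewrite -(card_in_imset (f := phi)); last first.
  move=> s1 s2 H1 H2 /= Heq; apply: (Acon_inj H1 H2) => i Hi.
  have : i \in enum (~: J) by rewrite mem_enum inE.
  move/(nthP i) => [t Ht Hti].
  have := congr1 (fun u : #|~: J|.-tuple 'I_n => nth i (val u) t) Heq.
  by rewrite /= !(nth_map i) // Hti.
have -> : n ^_ (n - k) = #|[set t : #|~: J|.-tuple 'I_n | all predT t & uniq t]|.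
  have HC : #|~: J| = n - k by rewrite -[n in RHS](card_ord n) -(cardsC J) HJ addKn.
  rewrite card_uniq_tuples HC.
  by rewrite cardT size_enum_ord.
apply: subset_leq_card; apply/subsetP => t /imsetP [s _ ->].
rewrite inE all_predT /= map_inj_uniq ?enum_uniq //; exact: perm_inj.
Qed.

Lemma enum_set_subseq (P : seq 'I_n) : subseq P (enum 'I_n) -> enum [set x in P] = P.
Proof.
move=> HP.
have U : uniq (enum 'I_n) by apply: enum_uniq.
move/(subseq_uniqP U): HP => HP; rewrite {2}HP.
rewrite enumT /enum_mem; apply: eq_filter => x /=; exact: in_set.
Qed.

Lemma extract (s : 'S_n) k : 0 < k ->
  k <= Int (oneline s) (shift_seq h (oneline s)) ->
  exists I J : {set 'I_n}, [/\ #|I| = k, #|J| = k & s \in Acon I J].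
Proof.
move=> k0 HI.
have [m /andP [Hm Hk]] : exists m : (size (oneline s)).-tuple bool,
    subseq (mask m (oneline s)) (shift_seq h (oneline s)) && (k <= size (mask m (oneline s))).
  case: (boolP [exists m : (size (oneline s)).-tuple bool,
    subseq (mask m (oneline s)) (shift_seq h (oneline s)) && (k <= size (mask m (oneline s)))])
    => [/existsP //|Hn]; exfalso.
  have : Int (oneline s) (shift_seq h (oneline s)) <= k.-1.
    apply/bigmax_leqP => m Pm; rewrite -ltnS prednK //; rewrite ltnNge; apply/negP => H.
    by apply: (negP Hn); apply/existsP; exists m; rewrite Pm H.
  by move/(leq_trans HI); rewrite -ltnS prednK // ltnn.
move: (val m) Hm Hk => {m} m Hm Hk.
set E := enum 'I_n in Hm Hk.
pose f := fun i : 'I_n => (s i).+1.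
pose g := fun i : 'I_n => (s i).+1 + h.
have Ho : oneline s = map f E by [].
have Hs : shift_seq h (oneline s) = map g E by rewrite /shift_seq Ho -map_comp.
rewrite Ho -map_mask in Hk Hm; rewrite Hs in Hm.
set P := mask m E in Hk Hm.
have [m2 _ HQ] := subseqP Hm.
rewrite -map_mask in HQ; set Q := mask m2 E in HQ.
rewrite size_map in Hk.
have HPs : subseq (take k P) E := subseq_trans (take_subseq _ _) (mask_subseq _ _).
have HQs : subseq (take k Q) E := subseq_trans (take_subseq _ _) (mask_subseq _ _).
have HQk : k <= size Q by rewrite -(size_map g) -HQ size_map.
exists [set x in take k P], [set x in take k Q].
rewrite !cardE !enum_set_subseq // !size_take.
split; [by case: ifP => // /negbT; rewrite -leqNgt => H; apply/eqP; rewrite eqn_leq H Hk | by case: ifP => // /negbT; rewrite -leqNgt => H; apply/eqP; rewrite eqn_leq H HQk | ].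
rewrite inE !enum_set_subseq //.
have := congr1 (take k) HQ; rewrite -!map_take => HT.
apply/eqP; apply: (inj_map succn_inj).
rewrite -!map_comp; exact: HT.
Qed.

Lemma card_bigcup_le (I T : finType) (P : pred I) (F : I -> {set T}) :
  #|\bigcup_(i | P i) F i| <= \sum_(i | P i) #|F i|.
Proof.
apply: (big_ind2 (fun (A : {set T}) m => #|A| <= m)).
- by rewrite cards0.
- move=> A1 m1 A2 m2 h1 h2; apply: leq_trans (leq_card_setU A1 A2).1 _.
  exact: leq_add.
- by [].
Qed.

Lemma count_bad k : 0 < k ->
  #|[set s : 'S_n | k <= Int (oneline s) (shift_seq h (oneline s))]|
    <= 'C(n, k) * 'C(n, k) * n ^_ (n - k).
Proof.
move=> k0.
pose S := [set A : {set 'I_n} | #|A| == k].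
pose D := setX S S.
apply: leq_trans (_ : #|\bigcup_(x in D) Acon x.1 x.2| <= _).
  apply: subset_leq_card; apply/subsetP => s; rewrite inE => /(extract k0) [I [J [HI HJ Hs]]].
  apply/bigcupP; exists (I, J) => //; by rewrite !inE HI HJ !eqxx.
apply: leq_trans (card_bigcup_le _ _) _.
apply: leq_trans (_ : \sum_(x in D) n ^_ (n - k) <= _).
  apply: leq_sum => x; rewrite !inE => /andP [_ /eqP HJ]; exact: card_Acon HJ.
rewrite sum_nat_const cardsX /S card_draws card_ord; by [].
Qed.
End Comb.

Lemma INR_mul a b : INR (a * b) = (INR a * INR b)%R.
Proof. by rewrite -mult_INR multE. Qed.

Lemma INR_fact_pos k : (0 < INR (k`!))%R.
Proof. apply: lt_0_INR; apply/ltP; exact: fact_gt0. Qed.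

Lemma ffact_le_exp n k : n ^_ k <= expn n k.
Proof. elim: k => [//|k IH]; rewrite ffactnSr expnSr; apply: leq_mul => //; exact: leq_subr. Qed.

Lemma exp_INR k : exp (INR k) = (exp 1 ^ k)%R.
Proof.
elim: k => [|k IH]; first by rewrite /= exp_0.
by rewrite S_INR exp_plus IH /= Rmult_comm.
Qed.

Lemma exp_pow_INR m x : (exp x ^ m)%R = exp (INR m * x).
Proof.
elim: m => [|m IH]; first by rewrite /= Rmult_0_l exp_0.
by rewrite S_INR Rmult_plus_distr_r Rmult_1_l exp_plus -IH /= Rmult_comm.
Qed.

Lemma succ_pow_le k : (INR k.+1 ^ k <= exp 1 * INR k ^ k)%R.
Proof.
case: k => [|k]; first by rewrite /= Rmult_1_r; have := exp_le_3; have := exp_ineq1_le 1; lra.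
set K := INR k.+1.
have K0 : (0 < K)%R by apply: lt_0_INR; apply/ltP.
have -> : INR k.+2 = (K * (1 + / K))%R by rewrite S_INR -/K; field; lra.
rewrite Rpow_mult_distr Rmult_comm; apply: Rmult_le_compat_r; first by apply: pow_le; lra.
have H1 : (0 <= 1 + / K <= exp (/ K))%R.
  split; last exact: exp_ineq1_le. have := Rinv_0_lt_compat K K0; lra.
apply: Rle_trans (pow_incr _ _ k.+1 H1) _.
rewrite exp_pow_INR -/K; right; f_equal; field; lra.
Qed.

Lemma pow_fact_le k : (INR k ^ k <= exp (INR k) * INR (k`!))%R.
Proof.
elim: k => [|k IH]; first by rewrite /= exp_0; lra.
rewrite factS INR_mul exp_INR.
change (INR k.+1 * INR k.+1 ^ k <= exp 1 * exp 1 ^ k * (INR k.+1 * INR k`!))%R.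
rewrite -exp_INR.
have Hk : (0 <= INR k)%R by apply: pos_INR.
have := succ_pow_le k.
set A := (INR k.+1 ^ k)%R; set B := (INR k ^ k)%R; set F := INR (k`!).
move=> HA.
have HS : (0 <= INR k.+1)%R by apply: pos_INR.
have He : (0 < exp 1)%R by apply: exp_pos.
apply: Rle_trans (Rmult_le_compat_l _ _ _ HS HA) _.
have := Rmult_le_compat_l _ _ _ (Rlt_le _ _ He) IH.
have := Rmult_le_compat_l _ _ _ HS (Rmult_le_compat_l _ _ _ (Rlt_le _ _ He) IH).
move=> H _; apply: Rle_trans H _; rewrite /F; right; ring.
Qed.

Lemma powE m k : Nat.pow m k = expn m k.
Proof. elim: k => [//|k IH]; rewrite expnS -IH -multE; reflexivity. Qed.

Lemma div_le_div a b p q : (0 < p)%R -> (0 < q)%R -> (a * q <= b * p)%R -> (a / p <= b / q)%R.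
Proof.
move=> hp hq h.
have -> : (a / p = a * q * / (p * q))%R by field; lra.
have -> : (b / q = b * p * / (p * q))%R by field; lra.
apply: Rmult_le_compat_r => //; apply: Rlt_le; apply: Rinv_0_lt_compat; nra.
Qed.

Lemma exp_mono a b : (a <= b)%R -> (exp a <= exp b)%R.
Proof. case/Rle_lt_or_eq_dec => [h|->]; [left; exact: exp_increasing | right; reflexivity]. Qed.

Lemma pow_comm y a b : ((y ^ a) ^ b = (y ^ b) ^ a)%R.
Proof. by rewrite -!pow_mult Nat.mul_comm. Qed.

Lemma real_bound (alpha : R) (n k B C nf : nat) :
  (0 < alpha)%R -> 0 < n -> 0 < nf -> (Rpower (INR n) (2/3+alpha) <= INR k)%R -> 0 < k ->
  B <= nf -> B * k`! <= C * C * nf -> C * k`! <= expn n k ->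
  (INR B / INR nf <= Rpower (exp 5 * Rpower (INR n) (- (3 * alpha / 2))) (Rpower (INR n) (2/3+alpha)))%R.
Proof.
move=> ha hn hnf hNk hk hBnf hB hC.
have hnfR : (0 < INR nf)%R by apply: lt_0_INR; apply/ltP.
have hx : (1 <= INR n)%R by apply: (le_INR 1); apply/leP.
set x := INR n in hx hNk *.
set N := Rpower x (2/3+alpha) in hNk *.
set c := (exp 5 * Rpower x (- (3 * alpha / 2)))%R.
have hN : (0 < N)%R by apply: exp_pos.
have hc : (0 < c)%R by apply: Rmult_lt_0_compat; apply: exp_pos.
case: (Rle_dec 1 c) => hc1.
  apply: (Rle_trans _ 1).
    have hle : (INR B <= INR nf)%R by apply: le_INR; apply/leP.
    rewrite /Rdiv; have := Rinv_0_lt_compat _ hnfR.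
    have -> : (1 = INR nf * / INR nf)%R by field; lra.
    move=> hi; apply: Rmult_le_compat_r => //; lra.
  rewrite -(Rpower_O c hc); apply: Rle_Rpower => //; lra.
have hc1' : (c < 1)%R by lra.
set K := INR k in hNk.
have hK : (0 < K)%R by lra.
set F := INR k`!.
have hF : (0 < F)%R by apply: INR_fact_pos.
set Cr := INR C.
have hCr : (0 <= Cr)%R by apply: pos_INR.
have S1 : (INR B / INR nf <= Cr * Cr / F)%R.
  apply: div_le_div => //.
  rewrite /F /Cr -!INR_mul; apply: le_INR; apply/leP; exact: hB.
set P := (x ^ k)%R.
set Q := (K ^ k)%R.
set T := exp K.
have hCF : (Cr * F <= P)%R.
  rewrite /Cr /F /P -INR_mul /x -pow_INR; apply: le_INR; apply/leP; rewrite powE; exact: hC.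
have hQ : (Q <= T * F)%R by apply: pow_fact_le.
have hQ0 : (0 < Q)%R by apply: pow_lt.
have hT : (0 < T)%R by apply: exp_pos.
set b := (x ^ 2 * exp 3 * / K ^ 3)%R.
have hbk : (b ^ k = P ^ 2 * T ^ 3 / Q ^ 3)%R.
  rewrite /b /P /Q /T !Rpow_mult_distr pow_inv (pow_comm x) (pow_comm K).
  rewrite exp_INR (pow_comm (exp 1)).
  have -> : exp 3 = (exp 1 ^ 3)%R by rewrite exp_pow_INR /=; f_equal; ring.
  rewrite pow1 (pow_comm x 2 k) /Rdiv /=; ring.
have S2 : (Cr * Cr / F <= b ^ k)%R.
  rewrite hbk; apply: div_le_div => //; first by apply: pow_lt.
  have h1 : (Cr * Cr * Q ^ 3 <= Cr * Cr * (T * F) ^ 3)%R.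
    apply: Rmult_le_compat_l; first nra.
    apply: pow_incr; lra.
  have h2 : ((Cr * F) ^ 2 <= P ^ 2)%R by apply: pow_incr; nra.
  have h3 : (0 <= T ^ 3 * F)%R by apply: Rmult_le_pos; [apply: pow_le|]; lra.
  apply: Rle_trans h1 _.
  have := Rmult_le_compat_r _ _ _ h3 h2.
  move=> h; apply: Rle_trans _ (Rle_trans _ _ _ h (Req_le _ _ _)).
    right; ring.
  ring.
have hx0 : (0 < x)%R by lra.
have hR3 : (0 < Rpower x (3 * alpha))%R by apply: exp_pos.
have hN3 : (N ^ 3 = x ^ 2 * Rpower x (3 * alpha))%R.
  rewrite -(Rpower_pow 3 N hN) /N Rpower_mult -(Rpower_pow 2 x hx0) -Rpower_plus.
  f_equal; simpl; field.
have hK3 : (x ^ 2 * Rpower x (3 * alpha) <= K ^ 3)%R.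
  rewrite -hN3; apply: pow_incr; lra.
have S3 : (b <= c)%R.
  have hb1 : (b <= exp 3 * Rpower x (- (3 * alpha)))%R.
    rewrite /b Rpower_Ropp.
    have hx2 : (0 < x ^ 2)%R by apply: pow_lt.
    have -> : (exp 3 * / Rpower x (3 * alpha) = x ^ 2 * exp 3 * / (x ^ 2 * Rpower x (3 * alpha)))%R.
      by field; split; lra.
    apply: Rmult_le_compat_l; first by apply: Rmult_le_pos; [lra| apply: Rlt_le; apply: exp_pos].
    apply: Rinv_le_contravar => //; nra.
  apply: Rle_trans hb1 _; rewrite /c.
  apply: Rmult_le_compat; [apply: Rlt_le; apply: exp_pos | apply: Rlt_le; apply: exp_pos | apply: exp_mono; lra |].
  apply: Rle_Rpower => //; lra.
have hb0 : (0 <= b)%R.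
  rewrite /b; apply: Rmult_le_pos; first by apply: Rmult_le_pos; [apply: pow_le; lra | apply: Rlt_le; apply: exp_pos].
  apply: Rlt_le; apply: Rinv_0_lt_compat; apply: pow_lt; lra.
have S4 : (b ^ k <= c ^ k)%R by apply: pow_incr; lra.
have S5 : (c ^ k <= Rpower c N)%R.
  rewrite -(Rpower_pow k c hc) /Rpower; apply: exp_mono.
  have : (ln c < 0)%R by rewrite -ln_1; apply: ln_increasing.
  rewrite -/K; nra.
lra.
Qed.

Lemma RlebP x y : reflect (x <= y)%R (Rleb x y).
Proof. rewrite /Rleb; case: Rle_dec => h; constructor => //. Qed.

Theorem lemma3p6 (alpha : R) (n h : nat) :
  (0 < alpha)%R -> (0 < n)%N -> (0 < h)%N ->
  (prob_Int_ge n h alpha <=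
   Rpower (exp 5 * Rpower (INR n) (- (3 * alpha / 2))) (Rpower (INR n) (2/3 + alpha)))%R.
Proof.
move=> ha hn hh.
rewrite /prob_Int_ge.
set N := Rpower (INR n) (2/3 + alpha).
have exk : exists k, Rleb N (INR k).
  have [k hk] := INR_unbounded N; exists k; apply/RlebP; lra.
case: (ex_minnP exk) => k /RlebP hNk kmin.
have hN : (0 < N)%R by apply: exp_pos.
have hk : 0 < k.
  case: k hNk {kmin} => [|k] //= H; lra.
set Bset := [set s : 'S_n | Rleb N (INR (Int (oneline s) (shift_seq h (oneline s))))].
have sub : Bset \subset [set s : 'S_n | k <= Int (oneline s) (shift_seq h (oneline s))].
  apply/subsetP => s; rewrite !inE => H; exact: kmin.
have hcnt := leq_trans (subset_leq_card sub) (count_bad n hh hk).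
have H1 : #|Bset| <= n`!.
  by rewrite -(card_Sn n) -cardsT; apply: subset_leq_card; apply/subsetP.
have H2 : #|Bset| * k`! <= 'C(n, k) * 'C(n, k) * n`!.
  case: (leqP k n) => hkn.
    rewrite -(ffact_fact (leq_subr k n)) subKn // mulnA.
    by rewrite leq_mul2r hcnt orbT.
  by move: hcnt; rewrite bin_small // !muln0 mul0n leqn0 => /eqP ->.
have H3 : 'C(n, k) * k`! <= expn n k by rewrite bin_ffact; apply: ffact_le_exp.
exact: (real_bound ha hn (fact_gt0 n) hNk hk H1 H2 H3).
Qed.
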